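(* Let $T$ be an iso-unique zero forcing tree and let $\mathcal{P}$ be a minimum path cover of $T$. If $e=xy$ is a connector edge of $\mathcal{P}$, then either both $x$ and $y$ are interior connector vertices, or one of them is interior and the other is the only vertex of a path from $\mathcal{P}$.
   Context: Zero forcing: in a graph $G$, starting with an initial set $S\subseteq V(G)$ of active vertices, repeatedly apply the rule: if an active vertex $u$ has exactly one non-active neighbor $v$, then $v$ becomes active. $S$ is a zero forcing set if eventually all vertices become active; a minimum zero forcing set is one of minimum size. A graph is an iso-unique zero forcing graph if for every two minimum zero forcing sets $A,B$ there is an automorphism $\phi$ with $\phi(A)=B$. A path cover of a tree $T$ is a set of vertex-disjoint paths of $T$ (a single vertex counts as a path) covering all vertices of $T$; it is minimum if no path cover has fewer paths. For a path cover $\mathcal{P}$, an edge $xy$ with $x,y$ in different paths of $\mathcal{P}$ is a connector edge and $x,y$ are connector vertices; a connector vertex is interior if it is an interior (non-end) vertex of its path in $\mathcal{P}$. *)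

(* Defs.v *)
From mathcomp Require Import all_boot all_fingroup.
Set Implicit Arguments. Unset Strict Implicit. Unset Printing Implicit Defensive.

Section Graphs.
Variables (V : finType) (g : rel V).

Definition simple_graph : Prop := symmetric g /\ irreflexive g.

Definition connected_graph : Prop := forall x y : V, connect g x y.

Definition has_cycle : Prop :=
  exists (x : V) (p : seq V),
    [/\ 2 <= size p, uniq (x :: p), path g x p & g (last x p) x].

Definition is_tree : Prop := [/\ simple_graph, connected_graph & ~ has_cycle].

Definition nbhd (u : V) : {set V} := [set v | g u v].

Definition zf_step (S : {set V}) : {set V} :=
  S :|: [set v | [exists u in S, (g u v) && (nbhd u :\: S == [set v])]].

(* the set of eventually active vertices (the rule can add at most #|V|
   vertices, so #|V| rounds suffice to reach the fixpoint) *)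
Definition zf_closure (S : {set V}) : {set V} := iter #|V| zf_step S.

Definition zero_forcing_set (S : {set V}) : Prop := zf_closure S = setT.

Definition min_zero_forcing_set (S : {set V}) : Prop :=
  zero_forcing_set S /\ forall S' : {set V}, zero_forcing_set S' -> #|S| <= #|S'|.

Definition automorphism (phi : {perm V}) : Prop :=
  forall x y : V, g (phi x) (phi y) = g x y.

Definition iso_unique_zf : Prop :=
  forall A B : {set V}, min_zero_forcing_set A -> min_zero_forcing_set B ->
    exists phi : {perm V}, automorphism phi /\ phi @: A = B.

Definition graph_path (p : seq V) : bool :=
  match p with
  | [::] => false
  | x :: q => path g x q && uniq p
  end.

Definition path_cover (P : seq (seq V)) : Prop :=
  all graph_path P /\ perm_eq (flatten P) (enum V).

Definition min_path_cover (P : seq (seq V)) : Prop :=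
  path_cover P /\ forall Q, path_cover Q -> size P <= size Q.

Definition same_path (P : seq (seq V)) (x y : V) : bool :=
  has (fun p => (x \in p) && (y \in p)) P.

Definition connector_edge (P : seq (seq V)) (x y : V) : bool :=
  g x y && ~~ same_path P x y.

Definition interior_vertex (P : seq (seq V)) (x : V) : bool :=
  has (fun p => [&& x \in p, x != head x p & x != last x p]) P.

Definition singleton_path (P : seq (seq V)) (x : V) : bool := [:: x] \in P.

End Graphs.

(* Main.v *)
Require Import Defs.
From mathcomp Require Import all_boot all_fingroup zify.
Set Implicit Arguments. Unset Strict Implicit. Unset Printing Implicit Defensive.

Section SeqAux.
Variable T : eqType.

Lemma mem_not_head (b : T) r : b \in r -> ohead r != Some b ->
  exists r1 c r2, r = r1 ++ c :: b :: r2.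
Proof.
elim: r => [|x t IH] //= Hb Hx.
rewrite in_cons in Hb; case/orP: Hb => [/eqP Eb|Hb]; first by rewrite Eb eqxx in Hx.
case: t IH Hb => [|y t'] IH Hb //.
case Ey: (y == b).
  by move/eqP: Ey => <-; exists [::], x, t'.
have [r1 [c [r2 E]]] : exists r1 c r2, y :: t' = r1 ++ c :: b :: r2.
  by apply: IH => //=; apply/eqP; case=> E; move: Ey; rewrite E eqxx.
by exists (x :: r1), c, r2; rewrite E.
Qed.

Lemma mem_not_last (b : T) r : b \in r -> (forall r1 c r2, r <> r1 ++ b :: c :: r2) ->
  exists r0, r = rcons r0 b.
Proof.
elim: r => [|x t IH] //= Hb Hn.
case: t IH Hb Hn => [|y t'] IH Hb Hn.
  by rewrite mem_seq1 in Hb; move/eqP: Hb => ->; exists [::].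
case Ex: (x == b).
  by move/eqP: Ex => Ex; exfalso; apply: (Hn [::] y t'); rewrite Ex.
rewrite in_cons eq_sym Ex /= in Hb.
have [r0 E] : exists r0, y :: t' = rcons r0 b.
  apply: IH => // r1 c r2 E; apply: (Hn (x :: r1) c r2); by rewrite E.
by exists (x :: r0); rewrite E.
Qed.

Lemma consec_index (r r1 r2 : seq T) c b : uniq r -> r = r1 ++ c :: b :: r2 ->
  index c r = size r1 /\ index b r = (size r1).+1.
Proof.
move=> U E; subst r.
move: U; rewrite cat_uniq => /and3P [_ H1 H2].
have cn : c \notin r1 by apply: contra H1 => Hc1; rewrite /= Hc1.
have bn : b \notin r1 by apply: contra H1 => Hb1; rewrite /= Hb1 orbT.
move: H2 => /= /andP [Hc _].
have bc : (c == b) = false.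
  by apply/negbTE; apply/negP => /eqP E; move: Hc; rewrite E mem_head.
rewrite !index_cat (negbTE cn) (negbTE bn) /= eqxx addn0.
by rewrite bc eqxx addn1.
Qed.

Lemma consec_eq (r r1 r2 r1' r2' : seq T) c b c' b' : uniq r ->
  r = r1 ++ c :: b :: r2 -> r = r1' ++ c' :: b' :: r2' ->
  (c = c' -> b = b') /\ (b = b' -> c = c') /\ ~ (c = b' /\ b = c').
Proof.
move=> U E E'.
have [i1 i2] := consec_index U E.
have [i1' i2'] := consec_index U E'.
have cr : c \in r by rewrite E mem_cat in_cons eqxx orbT.
have br : b \in r by rewrite E mem_cat !in_cons eqxx !orbT.
have cr' : c' \in r by rewrite E' mem_cat in_cons eqxx orbT.
have br' : b' \in r by rewrite E' mem_cat !in_cons eqxx !orbT.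
split; [|split].
- move=> Ec; subst c'.
  have Es : size r1 = size r1' by rewrite -i1 -i1'.
  by rewrite -(nth_index b br) -(nth_index b br') i2 i2' Es.
- move=> Eb; subst b'.
  have Es : size r1 = size r1' by apply: eq_add_S; rewrite -i2 -i2'.
  by rewrite -(nth_index c cr) -(nth_index c cr') i1 i1' Es.
- case=> Ec Eb; subst c b.
  have := i2; rewrite i1' => E1. have := i2'; rewrite i1 => E2.
  by move: E1; rewrite E2 => /eqP; rewrite -addn2 -[X in X == _]addn0 eqn_add2l.
Qed.

Lemma find_switch (p : pred T) x r : p x -> ~~ all p r ->
  exists r1 b a r2, x :: r = r1 ++ b :: a :: r2 /\ p b /\ ~~ p a.
Proof.
elim: r x => [|y t IH] x //= Px.
case Py: (p y) => /= H.
  have [r1 [b [a [r2 [E [Pb Pa]]]]]] := IH y Py H.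
  by exists (x :: r1), b, a, r2; rewrite E.
by exists [::], x, y, t; rewrite Py.
Qed.

End SeqAux.

Section Cover.
Variables (V : finType) (g : rel V).
Hypothesis gsym : symmetric g.
Hypothesis girr : irreflexive g.

Lemma gpE r : graph_path g r = [&& r != [::], sorted g r & uniq r].
Proof. by case: r. Qed.

Lemma flat_uniq_mem (Q : seq (seq V)) r : uniq (flatten Q) -> r \in Q -> uniq r.
Proof.
elim: Q => [|p Q IH] //=; rewrite cat_uniq in_cons => /and3P [Up _ UQ] /orP [/eqP ->|H] //.
exact: IH.
Qed.

Lemma flat_disj (Q : seq (seq V)) r s v : uniq (flatten Q) -> r \in Q -> s \in Q ->
  v \in r -> v \in s -> r = s.
Proof.
elim: Q => [|p Q IH] //=; rewrite cat_uniq => /and3P [_ H UQ].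
have K : forall q, q \in Q -> v \in q -> v \in p -> False.
  move=> q qQ vq vp; move/negP: H; apply; apply/hasP; exists v => //.
  by apply/flattenP; exists q.
rewrite !in_cons => /orP [/eqP ->|rQ] /orP [/eqP ->|sQ] vr vs //.
- by case: (K s sQ vs vr).
- by case: (K r rQ vr vs).
- exact: IH.
Qed.

Lemma cover_uniq Q : path_cover g Q -> uniq (flatten Q).
Proof. by case=> _ /perm_uniq ->; exact: enum_uniq. Qed.

Lemma cover_mem Q v : path_cover g Q -> exists2 r, r \in Q & v \in r.
Proof. by case=> _ /perm_mem H; apply/flattenP; rewrite H mem_enum. Qed.

Lemma cover_gp Q r : path_cover g Q -> r \in Q -> graph_path g r.
Proof. by case=> /allP H _ /H. Qed.

Lemma cover_ne Q r : path_cover g Q -> r \in Q -> r != [::].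
Proof. by move=> C /(cover_gp C); rewrite gpE => /and3P []. Qed.

Lemma cover_seq_uniq Q : path_cover g Q -> uniq Q.
Proof.
move=> C; have U := cover_uniq C.
have NE := cover_ne C.
elim: Q U NE {C} => [|p Q IH] // U NE.
have U1 : uniq (p ++ flatten Q) by []. rewrite cat_uniq in U1.
move/and3P: U1 => [_ H UQ].
rewrite cons_uniq; apply/andP; split.
  apply/negP => pQ.
  have := NE p (mem_head _ _); move: H pQ; case: p {NE U} => [|x t] // H pQ _.
  move/negP: H; apply; apply/hasP.
  exists x; first by apply/flattenP; exists (x :: t) => //; rewrite mem_head.
  by rewrite mem_head.
apply: IH => //.
by move=> q qQ; apply: NE; rewrite in_cons qQ orbT.
Qed.

Lemma cover_of Q Q' : path_cover g Q ->
  (forall r, r \in Q' -> (r != [::]) && sorted g r) ->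
  perm_eq (flatten Q') (flatten Q) -> path_cover g Q'.
Proof.
move=> [A Pm] H Pm'.
have U' : uniq (flatten Q').
  by rewrite (perm_uniq Pm') (perm_uniq Pm) enum_uniq.
split; last exact: perm_trans Pm' Pm.
apply/allP => r rQ; rewrite gpE; have /andP [-> ->] := H r rQ.
exact: flat_uniq_mem U' rQ.
Qed.

Lemma cover_perm Q Q' : perm_eq Q Q' -> path_cover g Q -> path_cover g Q'.
Proof.
move=> Pm [A Pf]; split; first by rewrite -(perm_all _ Pm).
apply: perm_trans Pf; apply: perm_flatten; by rewrite perm_sym.
Qed.

Definition consec (Q : seq (seq V)) a b :=
  exists2 r, r \in Q & exists r1 r2, r = r1 ++ a :: b :: r2.

Lemma consec_edge Q a b : all (graph_path g) Q -> consec Q a b -> g a b.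
Proof.
move=> /allP A [r rQ [r1 [r2 E]]].
have := A r rQ; rewrite gpE E => /and3P [_ S _].
by have [_ /=] := cat_sorted2 S; case/andP.
Qed.

Lemma consec_facts Q a b a' b' : uniq (flatten Q) -> consec Q a b -> consec Q a' b' ->
  (a = a' -> b = b') /\ (b = b' -> a = a') /\ ~ (a = b' /\ b = a').
Proof.
move=> U [r rQ [r1 [r2 E]]] [r' rQ' [r1' [r2' E']]].
have ar : a \in r by rewrite E mem_cat in_cons eqxx orbT.
have br : b \in r by rewrite E mem_cat !in_cons eqxx !orbT.
have ar' : a' \in r' by rewrite E' mem_cat in_cons eqxx orbT.
have br' : b' \in r' by rewrite E' mem_cat !in_cons eqxx !orbT.
have Ur := flat_uniq_mem U rQ.
split; [|split].
- move=> Ea; subst a'; have Err := flat_disj U rQ rQ' ar ar'; rewrite -Err in E'.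
  by have [H _] := consec_eq Ur E E'; apply: H.
- move=> Eb; subst b'; have Err := flat_disj U rQ rQ' br br'; rewrite -Err in E'.
  by have [_ [H _]] := consec_eq Ur E E'; apply: H.
- case=> Ea Eb; subst a' b'; have Err := flat_disj U rQ rQ' ar br'; rewrite -Err in E'.
  by have [_ [_ H]] := consec_eq Ur E E'; apply: H.
Qed.

Lemma consec_in Q a b : consec Q a b -> exists2 r, r \in Q & (a \in r) && (b \in r).
Proof.
case=> r rQ [r1 [r2 E]]; exists r => //.
by rewrite E !mem_cat !in_cons !eqxx !orbT.
Qed.

Definition heads (Q : seq (seq V)) : {set V} :=
  [set v | has (fun r => ohead r == Some v) Q].

Lemma heads_cons x t Q : heads ((x :: t) :: Q) = x |: heads Q.
Proof. by apply/setP => v; rewrite !inE /= eq_sym. Qed.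

Lemma heads_perm Q Q' : perm_eq Q Q' -> heads Q = heads Q'.
Proof. by move=> Pm; apply/setP => v; rewrite !inE (perm_has _ Pm). Qed.

Lemma heads_in Q v : v \in heads Q -> exists2 r, r \in Q & ohead r = Some v.
Proof. by rewrite inE => /hasP [r rQ /eqP E]; exists r. Qed.

Lemma card_heads Q : uniq (flatten Q) -> [::] \notin Q -> #|heads Q| = size Q.
Proof.
elim: Q => [|p Q IH] /=.
  by move=> _ _; apply/eqP; rewrite cards_eq0; apply/eqP/setP => v; rewrite !inE.
rewrite cat_uniq in_cons negb_or => /and3P [_ H UQ] /andP [pn nQ].
case: p pn H => [|x t] // _ H; rewrite heads_cons cardsU1 IH //.
suff -> : x \notin heads Q by [].
apply/negP => /heads_in [r rQ hr]; move/negP: H; apply; apply/hasP.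
exists x; last by rewrite mem_head.
apply/flattenP; exists r => //; case: r hr {rQ} => [|y s] //= [->]; exact: mem_head.
Qed.

End Cover.

Section Walk.
Variables (V : finType) (g : rel V).
Hypothesis gsym : symmetric g.
Hypothesis girr : irreflexive g.
Hypothesis acyc : ~ has_cycle g.

Lemma walk_ext b a w z : uniq (b :: a :: w) -> path g b (a :: w) -> g b z -> z != a ->
  uniq (z :: b :: a :: w).
Proof.
move=> U Pw gbz za; rewrite cons_uniq U andbT.
apply/negP => zin.
have zb : z != b by apply/negP => /eqP E; move: gbz; rewrite E girr.
move: zin; rewrite !in_cons (negbTE zb) (negbTE za) /= => zw.
case/splitPr: zw U Pw => w1 w2 U Pw.
apply: acyc; exists b, (a :: rcons w1 z); split.
- by rewrite /= size_rcons.
- by move: U; rewrite -cat_rcons -cat_cons -cat_cons cat_uniq => /andP [].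
- by move: Pw; rewrite -cat_rcons -cat_cons cat_path => /andP [].
- by rewrite /= last_rcons gsym.
Qed.

Lemma no_good_walk (Good : V -> V -> Prop) :
  (forall a b, Good a b -> g a b) ->
  (forall a b, Good a b -> exists z, [/\ g b z, z != a & Good b z]) ->
  forall a b, Good a b -> False.
Proof.
move=> Hg Hext a0 b0 G0.
have K : forall n, exists b a w, [/\ Good a b, uniq (b :: a :: w), path g b (a :: w) & size w = n].
  elim=> [|n [b [a [w [Gab U Pw Sw]]]]].
    exists b0, a0, [::]; split => //=.
      rewrite in_cons orbF andbT; apply/negP => /eqP E.
      by move: (Hg _ _ G0); rewrite E girr.
    by rewrite andbT gsym; apply: Hg.
  have [z [gbz za Gbz]] := Hext _ _ Gab.
  exists z, b, (a :: w); split => //=; last by rewrite Sw.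
  - exact: walk_ext.
  - by rewrite gsym gbz.
have [b [a [w [_ U _ Sw]]]] := K #|V|.
have := max_card (mem (b :: a :: w)).
by rewrite (card_uniqP U) /= Sw ltnNge leqnSn.
Qed.

End Walk.

Section ZF.
Variables (V : finType) (g : rel V).

Lemma step_sub (A : {set V}) : A \subset zf_step g A.
Proof. exact: subsetUl. Qed.

Lemma iter_sub k (S : {set V}) : S \subset iter k (zf_step g) S.
Proof.
elim: k => [|k IH] //=; apply: subset_trans IH _; exact: step_sub.
Qed.

Lemma closure_fix (S : {set V}) : zf_step g (zf_closure g S) = zf_closure g S.
Proof.
have K : forall k, (zf_step g (iter k (zf_step g) S) = iter k (zf_step g) S)
                   \/ k <= #|iter k (zf_step g) S|.
  elim=> [|k [IH|IH]]; first by right.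
  - by left; rewrite /= IH IH.
  - have [E|NE] := eqVneq (zf_step g (iter k (zf_step g) S)) (iter k (zf_step g) S).
      by left; rewrite /= E E.
    right; apply: leq_ltn_trans IH _; rewrite [iter k.+1 _ _]/=.
    apply: proper_card; rewrite properEneq eq_sym NE; exact: step_sub.
rewrite /zf_closure; case: (K #|V|) => // H.
have E : iter #|V| (zf_step g) S = setT.
  apply/eqP; rewrite eqEcard subsetT /=; by rewrite cardsT.
by rewrite E; apply/eqP; rewrite eqEsubset subsetT step_sub.
Qed.

Lemma stable (S : {set V}) u a : u \in zf_closure g S -> g u a -> a \notin zf_closure g S ->
  exists z, [/\ g u z, z \notin zf_closure g S & z != a].
Proof.
set C := zf_closure g S => uC gua aC.
case: (pickP [pred z | [&& g u z, z \notin C & z != a]]) => [z /and3P [? ? ?]|H].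
  by exists z.
have : a \in zf_step g C.
  rewrite inE; apply/orP; right; rewrite inE; apply/existsP; exists u.
  rewrite uC gua /=; apply/eqP/setP => z; rewrite !inE.
  have := H z; rewrite /= => /negbT; rewrite !negb_and negbK.
  case: (z =P a) => [->|_]; first by rewrite gua aC.
  by case: (g u z); case: (z \in C).
by rewrite /C closure_fix (negbTE aC).
Qed.

Hypothesis gsym : symmetric g.
Hypothesis girr : irreflexive g.
Hypothesis acyc : ~ has_cycle g.

Lemma heads_zf Q : path_cover g Q -> zero_forcing_set g (heads Q).
Proof.
move=> C; have U := cover_uniq C; have A : all (graph_path g) Q by case: C.
set Cl := zf_closure g (heads Q).
have HC : heads Q \subset Cl by exact: iter_sub.
apply/eqP; apply: contraT => NT; exfalso.
have [v vC] : exists v, v \notin Cl.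
  case: (pickP [pred v | v \notin Cl]) => [v ? |H]; first by exists v.
  by case/negP: NT; apply/eqP/setP => v; rewrite inE; have := H v; rewrite /= => /negbFE ->.
pose Good a b := g a b /\ ((b \notin Cl /\ ~ consec Q a b) \/
                            [/\ b \in Cl, a \notin Cl & consec Q b a]).
have [a0 [b0 G0]] : exists a b, Good a b.
  have [r rQ vr] := cover_mem v C.
  have := cover_ne C rQ; case: r rQ vr => [|x t] // rQ vr _.
  have xC : x \in Cl by apply: (subsetP HC); rewrite inE; apply/hasP; exists (x :: t).
  have NA : ~~ all (fun z => z \in Cl) t.
    apply/allPn; exists v => //; move: vr; rewrite in_cons => /orP [/eqP E|//].
    by move: vC; rewrite E xC.
  have [r1 [b [a [r2 [E [bC aC]]]]]] := find_switch xC NA.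
  have Cba : consec Q b a by exists (x :: t) => //; exists r1, r2.
  exists a, b; split; first by rewrite gsym; apply: consec_edge Cba.
  by right.
apply: (no_good_walk gsym girr acyc (Good:=Good) _ _ G0); first by move=> a b [].
move=> a b [gab [[bC Nab] | [bC aC Cba]]].
- have [r' rQ' br'] := cover_mem b C.
  have hb : ohead r' != Some b.
    apply/negP => /eqP Eh; move/negP: bC; apply; apply: (subsetP HC).
    by rewrite inE; apply/hasP; exists r' => //; rewrite Eh.
  have [r1 [c [r2 E]]] := mem_not_head br' hb.
  have Ccb : consec Q c b by exists r' => //; exists r1, r2.
  have ca : c != a by apply/negP => /eqP E1; apply: Nab; rewrite -E1.
  have gbc : g b c by rewrite gsym; apply: consec_edge Ccb.
  exists c; split => //; split => //.
  case cC: (c \in Cl).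
  + by right; split => //; rewrite bC.
  + left; split => //; move=> Cbc.
    by have [_ [_ H]] := consec_facts U Ccb Cbc; apply: H.
- have [z [gbz zC za]] := stable bC (consec_edge A Cba) aC.
  exists z; split => //; split => //; left; split => // Cbz.
  have [H _] := consec_facts U Cba Cbz.
  by move/eqP: za; apply; rewrite (H erefl).
Qed.

End ZF.

Section Lower.
Variables (V : finType) (g : rel V).

Definition Inv (A : {set V}) (Q : seq (seq V)) :=
  [/\ all (graph_path g) Q, uniq (flatten Q), (forall v, (v \in flatten Q) = (v \in A))
    & (forall r1 u b r2 r, r \in Q -> r = r1 ++ u :: b :: r2 -> nbhd g u \subset A)].

Lemma sorted_rcons2 (s : seq V) a b :
  sorted g (rcons (rcons s a) b) = sorted g (rcons s a) && g a b.
Proof.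
case: s => [|x s] //=; first by rewrite andbT.
by rewrite rcons_path last_rcons.
Qed.

Lemma rcons_consec (r r1 r2 : seq V) v u b :
  rcons r v = r1 ++ u :: b :: r2 ->
  (b = v /\ r = rcons r1 u) \/ (exists r2', r = r1 ++ u :: b :: r2').
Proof.
case/lastP: r2 => [|r2 z].
  have -> : r1 ++ [:: u; b] = rcons (rcons r1 u) b by rewrite -!cats1 -catA.
  by move/rcons_inj => [-> ->]; left.
rewrite -!rcons_cons -rcons_cat => /rcons_inj [-> _]; right; by exists r2.
Qed.

Lemma force_inv A Q u v : Inv A Q -> u \in A -> v \notin A -> g u v ->
  nbhd g u \subset v |: A -> exists Q', Inv (v |: A) Q' /\ size Q' = size Q.
Proof.
move=> [Ap U M NL] uA vA guv Nu.
have : u \in flatten Q by rewrite M.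
case/flattenP => r rQ ur.
have [r0 Er] : exists r0, r = rcons r0 u.
  apply: (@mem_not_last _ u r ur) => r1 c r2 E.
  have := NL r1 u c r2 r rQ E => /subsetP /(_ v); rewrite inE guv => /(_ erefl).
  by rewrite (negbTE vA).
have vr : v \notin r by apply/negP => vr; move: vA; rewrite -M; apply/negP/negPn/flattenP; exists r.
case/splitPr: rQ Ap U M NL => Q1 Q2 Ap U M NL.
have Pm : perm_eq (flatten (Q1 ++ rcons r v :: Q2)) (v :: flatten (Q1 ++ r :: Q2)).
  apply/seq.permP => q; rewrite /= !flatten_cat /= !count_cat -cats1 count_cat /=; lia.
exists (Q1 ++ rcons r v :: Q2); split; last by rewrite !size_cat.
split.
- move: Ap; rewrite !all_cat /= => /and3P [-> gr ->]; rewrite andbT /=.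
  move: gr; rewrite !gpE Er => /and3P [_ S Ur].
  rewrite sorted_rcons2 S guv /= rcons_uniq Ur andbT -Er vr.
  by rewrite andbT -size_eq0 size_rcons.
- rewrite (perm_uniq Pm) cons_uniq U andbT; apply/negP => vf; by move: vA; rewrite -M vf.
- by move=> w; rewrite (perm_mem Pm w) in_cons M !inE.
- move=> r1 u' b r2 r'; rewrite mem_cat in_cons => /or3P [r'Q|/eqP ->|r'Q] E.
  + by apply: subset_trans (NL _ _ _ _ r' _ E) _; [rewrite mem_cat r'Q | exact: subsetU1].
  + case/rcons_consec: E => [[_ E]|[r2' E]].
      by move: E; rewrite Er => /rcons_inj [_ <-].
    by apply: subset_trans (NL _ _ _ _ r _ E) _; [rewrite mem_cat mem_head orbT| exact: subsetU1].
  + by apply: subset_trans (NL _ _ _ _ r' _ E) _; [rewrite mem_cat in_cons r'Q !orbT | exact: subsetU1].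
Qed.

Lemma step_inv A Q : Inv A Q -> exists Q', Inv (zf_step g A) Q' /\ size Q' = size Q.
Proof.
set F := [set v | [exists u in A, g u v && (nbhd g u :\: A == [set v])]].
have K : forall (l : seq V) (A' : {set V}) Q, {subset l <= F} -> A \subset A' -> Inv A' Q ->
    exists Q', Inv (A' :|: [set v in l]) Q' /\ size Q' = size Q.
  elim=> [|v l IH] A' Q0 sub AA' I.
    by exists Q0; split => //; rewrite (_ : [set v in [::]] = set0) ?setU0 //; apply/setP => w; rewrite !inE.
  have sub' : {subset l <= F} by move=> w wl; apply: sub; rewrite in_cons wl orbT.
  have E : A' :|: [set w in v :: l] = (v |: A') :|: [set w in l].
    by apply/setP => w; rewrite !inE; case: (w == v); case: (w \in A'); case: (w \in l).
  rewrite E.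
  case vA': (v \in A').
    have E2 : v |: A' = A' by apply/setP => w; rewrite !inE; case: eqP => // ->.
    by rewrite E2; apply: IH.
  have : v \in F by apply: sub; rewrite mem_head.
  rewrite inE => /exists_inP [u uA /andP [guv /eqP Nu]].
  have Nu' : nbhd g u \subset v |: A'.
    apply/subsetP => z zN; rewrite !inE.
    case zA: (z \in A); first by rewrite (subsetP AA' z zA) orbT.
    have : z \in nbhd g u :\: A by rewrite inE zA zN.
    by rewrite Nu inE => ->.
  have [Q1 [I1 S1]] := force_inv I (subsetP AA' u uA) (negbT vA') guv Nu'.
  have [Q2 [I2 S2]] := IH (v |: A') Q1 sub' (subset_trans AA' (subsetU1 _ _)) I1.
  by exists Q2; split => //; rewrite S2 S1.
move=> I; have [Q' [I' S']] := K (enum F) A Q (fun w wl => etrans (esym (mem_enum F w)) wl) (subxx _) I.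
exists Q'; split => //.
suff -> : zf_step g A = A :|: [set v in enum F] by [].
by apply/setP => w; rewrite !inE mem_enum inE.
Qed.

Lemma zf_cover (S : {set V}) : zero_forcing_set g S -> exists Q, path_cover g Q /\ size Q = #|S|.
Proof.
move=> ZF.
have I0 : Inv S [seq [:: s] | s <- enum S].
  have Fl : forall l : seq V, flatten [seq [:: s] | s <- l] = l.
    by elim=> [|a l IH] //=; rewrite IH.
  split.
  - by rewrite all_map; apply/allP => s _ /=.
  - by rewrite Fl enum_uniq.
  - by move=> v; rewrite Fl mem_enum.
  - move=> r1 u b r2 r /mapP [s _ ->]; case: r1 => [|a [|c r1]] //.
have K : forall k, exists Q, Inv (iter k (zf_step g) S) Q /\ size Q = #|S|.
  elim=> [|k [Q [I SQ]]]; first by exists [seq [:: s] | s <- enum S]; rewrite size_map cardE.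
  have [Q' [I' S']] := step_inv I; exists Q'; split => //; by rewrite S'.
have [Q [[Ap U M _] SQ]] := K #|V|.
exists Q; split => //; split => //.
apply: uniq_perm => //; first exact: enum_uniq.
move=> v; transitivity (v \in iter #|V| (zf_step g) S); first exact: M.
have -> : iter #|V| (zf_step g) S = setT := ZF; by rewrite inE mem_enum.
Qed.

End Lower.

Section Seq2.
Variable T : eqType.

Lemma rev_head (x : T) t : exists t', rev (x :: t) = last x t :: t'.
Proof.
case/lastP: t => [|t z]; first by exists [::].
by exists (rev (x :: t)); rewrite -rcons_cons rev_rcons last_rcons.
Qed.

Lemma rev_last (x : T) t : last x (rev (x :: t)) = x.
Proof. by rewrite rev_cons last_rcons. Qed.

Lemma rev_consec (r r1 r2 : seq T) c b : rev r = r1 ++ c :: b :: r2 ->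
  r = rev r2 ++ b :: c :: rev r1.
Proof.
move=> E; rewrite -[r]revK E rev_cat.
by rewrite !rev_cons -!cats1 -!catA.
Qed.

Lemma in_cons2 (x y : T) s : x \in s -> x \in y :: s.
Proof. by rewrite in_cons => ->; rewrite orbT. Qed.

End Seq2.

Section Main.
Variables (V : finType) (g : rel V).
Hypothesis gsym : symmetric g.
Hypothesis girr : irreflexive g.
Hypothesis acyc : ~ has_cycle g.
Hypothesis iso : iso_unique_zf g.
Variable P : seq (seq V).
Hypothesis Pmin : min_path_cover g P.

Lemma min_heads Q : path_cover g Q -> size Q = size P -> min_zero_forcing_set g (heads Q).
Proof.
move=> C SQ; split; first exact: heads_zf.
move=> S' /zf_cover [Q' [C' S'Q]].
have Ne : [::] \notin Q by apply/negP => /(cover_ne C); rewrite eqxx.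
rewrite (card_heads (cover_uniq C) Ne) SQ -S'Q.
by case: Pmin => _; apply.
Qed.

Definition nonleaf v := 1 < #|nbhd g v|.

Lemma auto_card (phi : {perm V}) v : automorphism g phi -> #|nbhd g (phi v)| = #|nbhd g v|.
Proof.
move=> A.
have -> : nbhd g (phi v) = phi @: nbhd g v.
  apply/setP => z; rewrite -[z](permKV phi) (mem_imset _ _ (@perm_inj _ phi)) !inE.
  by rewrite A.
exact: card_imset (@perm_inj _ phi).
Qed.

Definition Dl := [set v | nonleaf v].

Lemma auto_count (phi : {perm V}) (S1 S2 : {set V}) : automorphism g phi -> phi @: S1 = S2 ->
  #|S1 :&: Dl| = #|S2 :&: Dl|.
Proof.
move=> A E.
have -> : S2 :&: Dl = phi @: (S1 :&: Dl).
  apply/setP => z; rewrite -[z](permKV phi) (mem_imset _ _ (@perm_inj _ phi)) -E.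
  by rewrite !inE (mem_imset _ _ (@perm_inj _ phi)) /nonleaf auto_card.
by rewrite (card_imset _ (@perm_inj _ phi)).
Qed.

Lemma count_add h (R : {set V}) : h \notin R -> #|(h |: R) :&: Dl| = (h \in Dl) + #|R :&: Dl|.
Proof.
move=> hR; rewrite setIUl.
case hD: (h \in Dl).
  have -> : [set h] :&: Dl = [set h].
    by apply/setP => z; rewrite !inE; case: (z =P h) => [->|] //=; move: hD; rewrite inE.
  by rewrite cardsU1 inE (negbTE hR).
have -> : [set h] :&: Dl = set0.
  by apply/setP => z; rewrite !inE; case: (z =P h) => [->|] //=; move: hD; rewrite inE.
by rewrite set0U.
Qed.

Lemma sorted_rev (s : seq V) : sorted g s -> sorted g (rev s).
Proof. by move=> S; rewrite rev_sorted; apply: sub_sorted S => a b; rewrite gsym. Qed.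

Lemma cover_rem Q r : path_cover g Q -> r \in Q -> exists Q0, perm_eq Q (r :: Q0) /\ r \notin Q0.
Proof.
move=> C rQ; exists (rem r Q); split; first exact: perm_to_rem.
by rewrite (mem_rem_uniq _ (cover_seq_uniq C)) inE eqxx.
Qed.

Lemma cover_rem2 Q r s : path_cover g Q -> r \in Q -> s \in Q -> r != s ->
  exists Q0, perm_eq Q (r :: s :: Q0).
Proof.
move=> C rQ sQ rs; have U := cover_seq_uniq C.
exists (rem s (rem r Q)).
apply: perm_trans (perm_to_rem rQ) _; rewrite perm_cons; apply: perm_to_rem.
by rewrite (mem_rem_uniq _ U) inE eq_sym rs.
Qed.

Lemma leaf_eq Q x t : path_cover g Q -> size Q = size P -> (x :: t) \in Q ->
  nonleaf x = nonleaf (last x t).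
Proof.
move=> C SQ rQ.
have [Q0 [Pm nQ0]] := cover_rem C rQ.
have C1 : path_cover g ((x :: t) :: Q0) := cover_perm Pm C.
have C2 : path_cover g (rev (x :: t) :: Q0).
  refine (cover_of C1 _ _).
    move=> r; rewrite in_cons => /orP [/eqP ->|rQ0].
      rewrite -size_eq0 size_rev /=; apply: sorted_rev.
      by have := cover_gp C1 (mem_head _ _); rewrite gpE => /and3P [].
    by have := cover_gp C1 (in_cons2 _ rQ0 ) ; rewrite gpE => /and3P [-> ->].
  change (perm_eq (rev (x :: t) ++ flatten Q0) ((x :: t) ++ flatten Q0)).
  by rewrite perm_cat2r perm_rev.
have S1 : size ((x :: t) :: Q0) = size P by rewrite -SQ (perm_size Pm).
have S2 : size (rev (x :: t) :: Q0) = size P by rewrite -S1.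
have [t' Et'] := rev_head x t.
have M1 := min_heads C1 S1.
have M2 := min_heads C2 S2.
have [phi [A Ephi]] := iso M1 M2.
have := auto_count A Ephi.
have U1 := cover_uniq C1.
have notin : forall z, z \in x :: t -> z \notin heads Q0.
  move=> z zr; apply/negP => /heads_in [r rQ0 hr].
  have zr' : z \in r by case: r hr {rQ0} => [|? ?] //= [->]; exact: mem_head.
  have E := flat_disj U1 (mem_head _ _) (in_cons2 _ rQ0) zr zr'.
  by move: nQ0; rewrite E rQ0.
rewrite Et' !heads_cons !count_add ?notin ?mem_head ?mem_last //.
by rewrite !inE => /eqP; rewrite eqn_add2r => /eqP; case: (nonleaf _); case: (nonleaf _).
Qed.

Definition orient (r : seq V) u t := u :: t = r \/ u :: t = rev r.

Lemma orient_ok Q r u t : path_cover g Q -> r \in Q -> orient r u t ->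
  sorted g (u :: t) /\ perm_eq (u :: t) r.
Proof.
move=> C rQ; have := cover_gp C rQ; rewrite gpE => /and3P [_ S _].
case=> ->; split => //; [exact: sorted_rev | by rewrite perm_rev].
Qed.

Lemma no_merge Q r s u t w t' : path_cover g Q -> size Q = size P ->
  r \in Q -> s \in Q -> r != s -> orient r u t -> orient s w t' -> g u w -> False.
Proof.
move=> C SQ rQ sQ rs Or Os guw.
have [Q0 Pm] := cover_rem2 C rQ sQ rs.
have C1 := cover_perm Pm C.
have [Sr Pr] := orient_ok C rQ Or.
have [Ss Ps] := orient_ok C sQ Os.
have C2 : path_cover g ((rev (u :: t) ++ w :: t') :: Q0).
  refine (cover_of C1 _ _).
    move=> r'; rewrite in_cons => /orP [/eqP ->|rQ0].
      apply/andP; split; first by rewrite -size_eq0 size_cat addn_eq0 /= andbF.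
      rewrite rev_cons sorted_cat_cons sorted_rcons2 guw /= andbT.
      rewrite -rev_cons sorted_rev //.
    by have := cover_gp C1 (in_cons2 _ (in_cons2 _ rQ0)); rewrite gpE => /and3P [-> ->].
  rewrite /= catA; apply: perm_cat => //; apply: perm_cat => //.
  by rewrite perm_rev.
have := Pmin.2 _ C2; rewrite -SQ (perm_size Pm) /=; lia.
Qed.

Lemma reroute Q r s u t s1 w s2 : path_cover g Q -> size Q = size P ->
  r \in Q -> s \in Q -> r != s -> orient r u t -> s = s1 ++ w :: s2 ->
  s1 != [::] -> s2 != [::] -> g w u -> nonleaf (head w s1) = nonleaf (last u t).
Proof.
move=> C SQ rQ sQ rs Or Es n1 n2 gwu.
have [Q0 Pm] := cover_rem2 C rQ sQ rs.
have C1 := cover_perm Pm C.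
have [Sr Pr] := orient_ok C rQ Or.
have Ss : sorted g s by have := cover_gp C sQ; rewrite gpE => /and3P [].
move: (Ss); rewrite Es sorted_cat_cons => /andP [Ss1 Ps2].
case: s1 n1 Es Ss1 => [|y s1] // _ Es Ss1.
set N := y :: (rcons s1 w ++ u :: t).
have C2 : path_cover g (N :: s2 :: Q0).
  refine (cover_of C1 _ _).
    move=> r'; rewrite !in_cons => /or3P [/eqP ->|/eqP ->|rQ0].
    - apply/andP; split => //; have H : sorted g (rcons (y :: s1) w ++ u :: t) by rewrite sorted_cat_cons sorted_rcons2 Ss1 gwu.
      exact: H.
    - by rewrite n2; apply: path_sorted Ps2.
    - by have := cover_gp C1 (in_cons2 _ (in_cons2 _ rQ0)); rewrite gpE => /and3P [-> ->].
  change (perm_eq (N ++ s2 ++ flatten Q0) (r ++ s ++ flatten Q0)).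
  rewrite Es /N.
  apply: (@perm_trans _ ((u :: t) ++ ((y :: s1) ++ w :: s2) ++ flatten Q0)).
    apply/seq.permP => q; rewrite /= !count_cat -cats1 !count_cat /=; rewrite !count_cat /=; lia.
  exact: (perm_cat Pr (perm_refl _)).
have S2 : size (N :: s2 :: Q0) = size P by rewrite -SQ (perm_size Pm).
have := leaf_eq C2 S2 (mem_head _ _).
by rewrite /N /= cat_rcons last_cat.
Qed.

End Main.

Lemma mem_not_last2 (T : eqType) (b x0 : T) t : b \in x0 :: t -> last x0 t != b ->
  exists r1 c r2, x0 :: t = r1 ++ b :: c :: r2.
Proof.
move=> bin lb.
have [t' Et'] := rev_head x0 t.
have : b \in rev (x0 :: t) by rewrite mem_rev.
move=> /mem_not_head /(_ _) [].
  by rewrite Et' /=; apply/eqP; case=> E; move/eqP: lb; apply.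
move=> r1 [c [r2 E]]; exists (rev r2), c, (rev r1); exact: rev_consec E.
Qed.

Section Main2.
Variables (V : finType) (g : rel V).
Hypothesis gsym : symmetric g.
Hypothesis girr : irreflexive g.
Hypothesis acyc : ~ has_cycle g.
Hypothesis iso : iso_unique_zf g.
Variable P : seq (seq V).
Hypothesis Pmin : min_path_cover g P.

Let C : path_cover g P := Pmin.1.
Let SP : size P = size P := erefl.
Let nl := nonleaf g.

Definition Uset := [set v | has (fun r => (v \in r) && nl (head v r)) P].

Lemma orient_end (x : V) x0 t : (x0 == x) || (last x0 t == x) -> exists tv, orient (x0 :: t) x tv.
Proof.
case/orP => [/eqP <-|/eqP E]; first by exists t; left.
have [t' Et'] := rev_head x0 t; exists t'; right; by rewrite Et' E.
Qed.

Lemma ext_U v a : v \in Uset -> exists z, [/\ g v z, z != a & z \in Uset].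
Proof.
rewrite inE => /hasP [r rP /andP [vr hr]].
have U := cover_uniq C; have A : all (graph_path g) P by case: C.
case: r rP vr hr => [|x t] // rP vr hr; rewrite /= in hr.
have inU : forall z, z \in x :: t -> z \in Uset.
  by move=> z zr; rewrite inE; apply/hasP; exists (x :: t) => //; rewrite zr.
have LE := leaf_eq gsym girr acyc iso Pmin C SP rP.
case: (boolP ((x == v) || (last x t == v))) => [Hend|Hint].
- have nv : nl v.
    by case/orP: Hend => /eqP <- //; rewrite /nl -LE.
  have : ~~ (nbhd g v \subset [set a]).
    apply/negP => /subset_leq_card; rewrite cards1 leqNgt; by move/negP.
  case/subsetPn => z; rewrite !inE => gvz za.
  exists z; split => //.
  have [s sP zs] := cover_mem z C.
  case: (eqVneq (x :: t) s) => [Es|rs]; first by apply: inU; rewrite Es.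
  have [tv Ov] := orient_end Hend.
  have := cover_ne C sP; case: s sP zs rs => [|y t2] // sP zs rs _.
  case: (boolP ((y == z) || (last y t2 == z))) => [Hz|Hz].
    have [tz Oz] := orient_end Hz.
    by case: (no_merge gsym Pmin C SP rP sP rs Ov Oz gvz).
  have [s1 [s2 Es]] : exists s1 s2, y :: t2 = s1 ++ z :: s2.
    by case/splitPr: zs => s1 s2; exists s1, s2.
  case: s1 Es => [|y' s1] Es.
    by case: Es Hz => ->; rewrite eqxx.
  case: Es => Ey Et2; subst y'.
  case: (eqVneq s2 [::]) => [E2|n2].
    by move: Hz; rewrite Et2 E2 last_cat /= eqxx orbT.
  have gzv : g z v by rewrite gsym.
  have Es : y :: t2 = (y :: s1) ++ z :: s2 by rewrite Et2.
  have := reroute gsym girr acyc iso Pmin C SP rP sP rs Ov Es isT n2 gzv.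
  rewrite /= => E; rewrite inE; apply/hasP; exists (y :: t2) => //; rewrite zs /= /nl E.
  case: Ov => Ov.
    by case: Ov => -> ->; rewrite -LE; exact: hr.
  have : last x (v :: tv) = x by rewrite Ov rev_last.
  by rewrite /= => ->.
- have [r1 [c [r2 Er]]] : exists r1 c r2, x :: t = r1 ++ c :: v :: r2.
    apply: mem_not_head => //=; apply/eqP; case=> E; move: Hint; by rewrite E eqxx.
  have [r1' [d [r2' Er']]] : exists r1 c r2, x :: t = r1 ++ v :: c :: r2.
    apply: mem_not_last2 => //; apply/negP => E; move: Hint; by rewrite E orbT.
  have Ccv : consec P c v by exists (x :: t) => //; exists r1, r2.
  have Cvd : consec P v d by exists (x :: t) => //; exists r1', r2'.
  have cd : c != d.
    apply/negP => /eqP E; rewrite -E in Cvd.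
    by have [_ [_ H]] := consec_facts U Ccv Cvd; apply: H.
  have cr : c \in x :: t by rewrite Er mem_cat in_cons eqxx orbT.
  have dr : d \in x :: t by rewrite Er' mem_cat !in_cons eqxx !orbT.
  have gvc : g v c by rewrite gsym; apply: consec_edge Ccv.
  have gvd : g v d by apply: consec_edge Cvd.
  case: (eqVneq c a) => [Ec|ca].
    by exists d; split => //; [rewrite -Ec eq_sym | apply: inU].
  by exists c; split => //; apply: inU.
Qed.

Lemma U_empty v : v \in Uset -> False.
Proof.
move=> vU; have [z [gvz _ zU]] := ext_U v vU.
apply: (no_good_walk gsym girr acyc (Good := fun a b => [/\ g a b, a \in Uset & b \in Uset]) _ _ (And3 gvz vU zU)).
  by move=> a b [].
move=> a b [_ _ bU]; have [w [gbw wa wU]] := ext_U a bU.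
by exists w; split.
Qed.

Lemma bad_end p x y : p \in P -> x \in p -> (head x p == x) || (last x p == x) ->
  p != [:: x] -> y \notin p -> g x y -> False.
Proof.
have U := cover_uniq C.
case: p => [|x0 t] // pP xp He np yp gxy.
have Sp : sorted g (x0 :: t) by have := cover_gp C pP; rewrite gpE => /and3P [].
have [c [gxc cp]] : exists c, g x c /\ c \in x0 :: t.
  case/orP: He => /= /eqP E.
    subst x0; case: t np Sp {xp yp pP} => [|c t]; first by rewrite eqxx.
    move=> _ /= /andP [gxc _].
    by exists c; split => //; rewrite in_cons mem_head orbT.
  have [t' Et'] := rev_head x0 t; rewrite E in Et'.
  have Sr : sorted g (rev (x0 :: t)) by apply: sorted_rev.
  case: t' Et' => [|c t'] Et'.
    have : size (rev (x0 :: t)) = 1 by rewrite Et'.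
    rewrite size_rev; case: t np E {Sp Sr Et' xp yp pP} => [|? ?] //= np E.
    by move: np; rewrite E eqxx.
  move: Sr; rewrite Et' /= => /andP [gxc _]; exists c; split => //.
  by rewrite -mem_rev Et' in_cons mem_head orbT.
have cy : c != y by apply/negP => /eqP E; move: yp; rewrite -E cp.
have nx : nl x.
  rewrite /nl /nonleaf; apply: leq_trans (subset_leq_card (_ : [set y; c] \subset _)).
    by rewrite cards2 eq_sym cy.
  by apply/subsetP => z; rewrite !inE => /orP [] /eqP ->; rewrite ?gxy ?gxc.
apply: (@U_empty x); rewrite inE; apply/hasP; exists (x0 :: t) => //; rewrite xp /=.
case/orP: He => /= /eqP E; first by rewrite E.
by rewrite /nl (leaf_eq gsym girr acyc iso Pmin C SP pP) E.
Qed.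

End Main2.

Theorem lemma3p7 (V : finType) (g : rel V) (P : seq (seq V)) (x y : V) :
  is_tree g -> iso_unique_zf g -> min_path_cover g P ->
  connector_edge g P x y ->
  (interior_vertex P x && interior_vertex P y)
  || (interior_vertex P x && singleton_path P y)
  || (interior_vertex P y && singleton_path P x).
Proof.
move=> [[gsym girr] _ acyc] iso Pmin /andP [gxy nsame].
have C : path_cover g P := Pmin.1.
have [p pP xp] := cover_mem x C.
have [q qP yq] := cover_mem y C.
have yp : y \notin p.
  by apply/negP => yp; move/negP: nsame; apply; apply/hasP; exists p => //; rewrite xp yp.
have xq : x \notin q.
  by apply/negP => xq; move/negP: nsame; apply; apply/hasP; exists q => //; rewrite xq yq.
have pq : p != q by apply/negP => /eqP E; move: yp; rewrite E yq.
have endv : forall v r, r \in P -> v \in r -> ~~ interior_vertex P v ->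
    (head v r == v) || (last v r == v).
  move=> v r rP vr nI; apply/negP => H; apply: (negP nI); apply/hasP; exists r => //.
  rewrite vr /= !(eq_sym v); by move/negP: H; rewrite negb_or.
have nsing : forall v r, r \in P -> ~~ singleton_path P v -> r != [:: v].
  by move=> v r rP nS; apply/negP => /eqP E; move: nS; rewrite /singleton_path -E rP.
have Ex : ~~ interior_vertex P x -> ~~ singleton_path P x -> False.
  move=> nI nS; exact: (bad_end gsym girr acyc iso Pmin pP xp (endv _ _ pP xp nI) (nsing _ _ pP nS) yp gxy).
have Ey : ~~ interior_vertex P y -> ~~ singleton_path P y -> False.
  move=> nI nS; apply: (bad_end gsym girr acyc iso Pmin qP yq (endv _ _ qP yq nI) (nsing _ _ qP nS) xq).
  by rewrite gsym.
have Exy : ~~ interior_vertex P x -> ~~ interior_vertex P y -> False.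
  move=> nIx nIy.
  have := cover_ne C pP; have := cover_ne C qP.
  have hx := endv _ _ pP xp nIx; have hy := endv _ _ qP yq nIy; move: hx hy pP qP pq.
  case: p {xp yp Ex nsame} => [|x0 t] //; case: q {yq xq Ey} => [|y0 t'] // hx hy pP qP pq _ _.
  have [tx Ox] := orient_end hx.
  have [ty Oy] := orient_end hy.
  exact: (no_merge gsym Pmin C erefl pP qP pq Ox Oy gxy).
case: (interior_vertex P x) Ex Exy => Ex Exy; case: (interior_vertex P y) Ey Exy => Ey Exy;
  case: (singleton_path P x) Ex => Ex; case: (singleton_path P y) Ey => Ey //=; exfalso;
  by [apply: Ex | apply: Ey | apply: Exy].
Qed.
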